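(* Let $(\mathfrak J,B)$ be a nilpotent pseudo-euclidean Jordan algebra with $\mathfrak J\notin\mathcal E$, where $\mathcal E$ consists of $\{0\}$ and the one-dimensional Jordan algebra with zero product. Then $\mathfrak J$ is obtained (up to isomorphism) from finitely many elements $\mathfrak J_1,\dots,\mathfrak J_n$ of $\mathcal E$ by a finite sequence of orthogonal direct sums of pseudo-euclidean Jordan algebras and/or generalized double extensions by the one-dimensional Jordan algebra with zero product.
   Context: All algebras are finite-dimensional over a field $\mathbb K$ of characteristic zero. A Jordan algebra is a commutative algebra with $x(yx^2)=(xy)x^2$; $(\mathfrak J,B)$ is pseudo-euclidean if $B$ is a nondegenerate symmetric bilinear form with $B(xy,z)=B(x,yz)$. The orthogonal direct sum of pseudo-euclidean algebras is the product algebra with the direct sum of the forms. Associator $(x,y,z)=(xy)z-x(yz)$. Admissible pair of a Jordan algebra $\mathfrak J_1$: $(D,x_0)\in\mathrm{End}(\mathfrak J_1)\times\mathfrak J_1$ with, for all $x,y$: $D(x^2y)=x^2D(y)+2D(x)(xy)-2x(D(x)y)$; $D(x)D(y)-D(D(x)y)=\tfrac12(x_0,y,x)$; $D(x_0x)=x_0D(x)$; $xD(x^2)=x^2D(x)$; $D^2(x^2)=2(D(x))^2-2xD^2(x)+x_0x^2$; $D^3(x)=\tfrac32x_0D(x)-\tfrac12xD(x_0)$; $D^2(x_0)=x_0^2$. Generalized double extension of a pseudo-euclidean $(\mathfrak J_1,B_1)$ by the one-dimensional algebra with zero product via such a pair with $D$ $B_1$-symmetric and $k\in\mathbb K$: $\mathbb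 Ka\oplus\mathfrak J_1\oplus\mathbb Kb$ with product $b\star\cdot=\cdot\star b=0$, $a\star a=x_0+kb$, $x\star y=xy+B_1(Dx,y)b$, $a\star x=x\star a=D(x)+B_1(x_0,x)b$ ($x,y\in\mathfrak J_1$), and scalar product extending $B_1$ with $B(a,b)=1$, $B(a,a)=B(b,b)=0$, $a,b\perp\mathfrak J_1$. *)

(* Defs.v *)
From HB Require Import structures.
From mathcomp Require Import all_boot all_order all_algebra.
Set Implicit Arguments. Unset Strict Implicit. Unset Printing Implicit Defensive.
Import GRing.Theory.
Local Open Scope ring_scope.

Record falg (K : fieldType) (n : nat) := FAlg {
  amul : 'rV[K]_n -> 'rV[K]_n -> 'rV[K]_n ;
  aform : 'rV[K]_n -> 'rV[K]_n -> K }.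

Section Defs.
Variable K : fieldType.

Definition bilinear_mul n (m : 'rV[K]_n -> 'rV[K]_n -> 'rV[K]_n) :=
  (forall a x y z, m (a *: x + y) z = a *: m x z + m y z) /\
  (forall a x y z, m z (a *: x + y) = a *: m z x + m z y).

Definition bilinear_form n (B : 'rV[K]_n -> 'rV[K]_n -> K) :=
  (forall a x y z, B (a *: x + y) z = a * B x z + B y z) /\
  (forall a x y z, B z (a *: x + y) = a * B z x + B z y).

Definition is_jordan n (A : falg K n) :=
  let m := amul A in
  bilinear_mul m /\ (forall x y, m x y = m y x) /\
  (forall x y, m x (m y (m x x)) = m (m x y) (m x x)).

Definition is_pseudo_euclidean n (A : falg K n) :=
  let B := aform A in let m := amul A in
  bilinear_form B /\ (forall x y, B x y = B y x) /\
  (forall x, (forall y, B x y = 0) -> x = 0) /\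
  (forall x y z, B (m x y) z = B x (m y z)).

Definition is_pE_jordan n (A : falg K n) := is_jordan A /\ is_pseudo_euclidean A.

Inductive prod_deg n (A : falg K n) : nat -> 'rV[K]_n -> Prop :=
| prod_deg1 x : prod_deg A 1 x
| prod_degM i j x y : prod_deg A i x -> prod_deg A j y ->
    prod_deg A (i + j)%N (amul A x y).

(* nilpotent: J^k = 0 for some k >= 1, J^k being spanned by the products of degree k *)
Definition nilpotent_alg n (A : falg K n) :=
  exists k, (0 < k)%N /\ forall x, prod_deg A k x -> x = 0.

Definition in_E n (A : falg K n) :=
  n = 0%N \/ (n = 1%N /\ forall x y, amul A x y = 0).

Definition osum n1 n2 (A1 : falg K n1) (A2 : falg K n2) : falg K (n1 + n2) :=
  FAlg (fun z w => row_mx (amul A1 (lsubmx z) (lsubmx w)) (amul A2 (rsubmx z) (rsubmx w)))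
       (fun z w => aform A1 (lsubmx z) (lsubmx w) + aform A2 (rsubmx z) (rsubmx w)).

Definition assoc n (A : falg K n) x y z :=
  amul A (amul A x y) z - amul A x (amul A y z).

Definition admissible n (A : falg K n) (D : 'M[K]_n) (x0 : 'rV[K]_n) :=
  let m := amul A in let Df := fun x => x *m D in
  let sq := fun x => m x x in
  (forall x y, Df (m (sq x) y) = m (sq x) (Df y) + 2%:R *: m (Df x) (m x y)
                                     - 2%:R *: m x (m (Df x) y)) /\
  (forall x y, m (Df x) (Df y) - Df (m (Df x) y) = 2%:R^-1 *: assoc A x0 y x) /\
  (forall x, Df (m x0 x) = m x0 (Df x)) /\
  (forall x, m x (Df (sq x)) = m (sq x) (Df x)) /\
  (forall x, Df (Df (sq x)) = 2%:R *: sq (Df x) - 2%:R *: m x (Df (Df x)) + m x0 (sq x)) /\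
  (forall x, Df (Df (Df x)) = (3%:R / 2%:R) *: m x0 (Df x) - 2%:R^-1 *: m x (Df x0)) /\
  Df (Df x0) = sq x0.

Definition form_symmetric n (A : falg K n) (D : 'M[K]_n) :=
  forall x y, aform A (x *m D) y = aform A x (y *m D).

(* Generalized double extension  K a (+) J1 (+) K b, carried by 'rV_(1 + (n + 1)):
   an element z is  (coef_a z) a + (mid z) + (coef_b z) b. *)
Definition coef_a n (z : 'rV[K]_(1 + (n + 1))) : K := lsubmx z 0 0.
Definition mid n (z : 'rV[K]_(1 + (n + 1))) : 'rV[K]_n := lsubmx (rsubmx z).
Definition coef_b n (z : 'rV[K]_(1 + (n + 1))) : K := rsubmx (rsubmx z) 0 0.
Definition mk3 n (al : K) (x : 'rV[K]_n) (be : K) : 'rV[K]_(1 + (n + 1)) :=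
  row_mx (al%:M) (row_mx x (be%:M)).

Definition dext n (A : falg K n) (D : 'M[K]_n) (x0 : 'rV[K]_n) (k : K)
  : falg K (1 + (n + 1)) :=
  FAlg (fun z w =>
         let al := coef_a z in let x := mid z in
         let al' := coef_a w in let x' := mid w in
         mk3 0
           ((al * al') *: x0 + al *: (x' *m D) + al' *: (x *m D) + amul A x x')
           (al * al' * k + al * aform A x0 x' + al' * aform A x0 x
              + aform A (x *m D) x'))
       (fun z w => coef_a z * coef_b w + coef_b z * coef_a w
                   + aform A (mid z) (mid w)).

Inductive obtained : forall n, falg K n -> Prop :=
| obt_base n (A : falg K n) : in_E A -> is_pE_jordan A -> obtained A
| obt_osum n1 n2 (A1 : falg K n1) (A2 : falg K n2) :
    obtained A1 -> obtained A2 -> obtained (osum A1 A2)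
| obt_dext n (A : falg K n) (D : 'M[K]_n) (x0 : 'rV[K]_n) (k : K) :
    obtained A -> admissible A D x0 -> form_symmetric A D ->
    obtained (dext A D x0 k).

Definition isometric_iso n1 n2 (A1 : falg K n1) (A2 : falg K n2) :=
  exists f : {linear 'rV[K]_n1 -> 'rV[K]_n2},
    bijective f /\ (forall x y, f (amul A1 x y) = amul A2 (f x) (f y)) /\
    (forall x y, aform A2 (f x) (f y) = aform A1 x y).

End Defs.

(* Main.v *)
From HB Require Import structures.
From Stdlib Require Import Classical.
Require Import Defs.
From mathcomp Require Import all_boot all_order all_algebra.
From mathcomp Require Import ring zify.
Set Implicit Arguments. Unset Strict Implicit. Unset Printing Implicit Defensive.
Import GRing.Theory.
Local Open Scope ring_scope.

Section S.
Variable K : fieldType.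
Local Notation rV n := 'rV[K]_n.

Definition lin m n (f : rV m -> rV n) := forall a x y, f (a *: x + y) = a *: f x + f y.

Lemma lin0 m n (f : rV m -> rV n) : lin f -> f 0 = 0.
Proof.
move=> Hf; have := Hf 1 0 0; rewrite !scale1r addr0 => H.
by apply: (@addrI _ (f 0)); rewrite addr0 -H.
Qed.

Lemma linD m n (f : rV m -> rV n) : lin f -> forall x y, f (x + y) = f x + f y.
Proof. by move=> Hf x y; rewrite -[x]scale1r Hf !scale1r. Qed.

Lemma linZ m n (f : rV m -> rV n) : lin f -> forall a x, f (a *: x) = a *: f x.
Proof. by move=> Hf a x; rewrite -[a *: x]addr0 Hf (lin0 Hf) addr0. Qed.

Lemma lin1E m n (f : rV m -> rV n) : lin f -> forall u, u *m lin1_mx f = f u.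
Proof.
move=> Hf u.
rewrite [u in RHS]row_sum_delta (big_morph f (linD Hf) (lin0 Hf)); apply/rowP=> i.
by rewrite mxE summxE; apply: eq_bigr => j _; rewrite (linZ Hf) !mxE.
Qed.

Lemma mk_iso n1 n2 (A1: falg K n1) (A2 : falg K n2) (F : rV n1 -> rV n2) (G : rV n2 -> rV n1) :
  lin F -> cancel F G -> cancel G F ->
  (forall x y, F (amul A1 x y) = amul A2 (F x) (F y)) ->
  (forall x y, aform A2 (F x) (F y) = aform A1 x y) -> isometric_iso A1 A2.
Proof.
move=> HF FG GF Hm Hb; exists (mulmxr (lin1_mx F)); rewrite /=.
split; first by exists G => x /=; rewrite lin1E // ?FG ?GF.
by split=> x y /=; rewrite !lin1E.
Qed.

Lemma iso_lin n1 n2 (f : {linear rV n1 -> rV n2}) : lin f.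
Proof. by move=> a x y; rewrite linearP. Qed.

Lemma iso_trans n1 n2 n3 (A1: falg K n1) (A2 : falg K n2) (A3 : falg K n3) :
  isometric_iso A1 A2 -> isometric_iso A2 A3 -> isometric_iso A1 A3.
Proof.
move=> [f [[g fg gf] [fm fb]]] [f' [[g' fg' gf'] [fm' fb']]].
apply: (@mk_iso _ _ _ _ (f' \o f) (g \o g')).
- by move=> a x y /=; rewrite !linearP.
- by move=> x /=; rewrite fg' fg.
- by move=> x /=; rewrite gf gf'.
- by move=> x y /=; rewrite fm fm'.
- by move=> x y /=; rewrite fb' fb.
Qed.

Lemma iso_refl n (A : falg K n) : isometric_iso A A.
Proof. by apply: (@mk_iso _ _ _ _ id id). Qed.


Section Bil.
Variable n : nat.
Variable m : rV n -> rV n -> rV n.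
Hypothesis Hm : bilinear_mul m.

Lemma bm0l z : m 0 z = 0.
Proof.
have := (proj1 Hm) 1 0 0 z; rewrite !scale1r addr0 => H.
by apply: (@addrI _ (m 0 z)); rewrite addr0 -H.
Qed.
Lemma bm0r z : m z 0 = 0.
Proof.
have := (proj2 Hm) 1 0 0 z; rewrite !scale1r addr0 => H.
by apply: (@addrI _ (m z 0)); rewrite addr0 -H.
Qed.
Lemma bmDl x y z : m (x + y) z = m x z + m y z.
Proof. by rewrite -[x]scale1r (proj1 Hm) !scale1r. Qed.
Lemma bmDr x y z : m z (x + y) = m z x + m z y.
Proof. by rewrite -[x]scale1r (proj2 Hm) !scale1r. Qed.
Lemma bmZl a x z : m (a *: x) z = a *: m x z.
Proof. by rewrite -[a *: x]addr0 (proj1 Hm) bm0l addr0. Qed.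
Lemma bmZr a x z : m z (a *: x) = a *: m z x.
Proof. by rewrite -[a *: x]addr0 (proj2 Hm) bm0r addr0. Qed.
Lemma bmNl x z : m (- x) z = - m x z.
Proof. by rewrite -scaleN1r bmZl scaleN1r. Qed.
Lemma bmNr x z : m z (- x) = - m z x.
Proof. by rewrite -scaleN1r bmZr scaleN1r. Qed.
End Bil.

Section Form.
Variable n : nat.
Variable B : rV n -> rV n -> K.
Hypothesis HB : bilinear_form B.

Lemma bf0l z : B 0 z = 0.
Proof.
have := (proj1 HB) 1 0 0 z; rewrite !scale1r mul1r addr0 => H.
by apply: (@addrI _ (B 0 z)); rewrite addr0 -H.
Qed.
Lemma bf0r z : B z 0 = 0.
Proof.
have := (proj2 HB) 1 0 0 z; rewrite !scale1r mul1r addr0 => H.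
by apply: (@addrI _ (B z 0)); rewrite addr0 -H.
Qed.
Lemma bfDl x y z : B (x + y) z = B x z + B y z.
Proof. by rewrite -[x]scale1r (proj1 HB) mul1r scale1r. Qed.
Lemma bfDr x y z : B z (x + y) = B z x + B z y.
Proof. by rewrite -[x]scale1r (proj2 HB) mul1r scale1r. Qed.
Lemma bfZl a x z : B (a *: x) z = a * B x z.
Proof. by rewrite -[a *: x]addr0 (proj1 HB) bf0l addr0. Qed.
Lemma bfZr a x z : B z (a *: x) = a * B z x.
Proof. by rewrite -[a *: x]addr0 (proj2 HB) bf0r addr0. Qed.
Lemma bfNl x z : B (- x) z = - B x z.
Proof. by rewrite -scaleN1r bfZl mulN1r. Qed.
Lemma bfNr x z : B z (- x) = - B z x.
Proof. by rewrite -scaleN1r bfZr mulN1r. Qed.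
End Form.

Lemma inv_lin n1 n2 (f : rV n1 -> rV n2) g : lin f -> cancel f g -> cancel g f -> lin g.
Proof.
move=> Hf fg gf a x y; apply: (can_inj fg); by rewrite Hf !gf.
Qed.

Lemma transport n1 n2 (A1 : falg K n1) (A2 : falg K n2) :
  isometric_iso A1 A2 -> is_pE_jordan A2 -> nilpotent_alg A2 ->
  is_pE_jordan A1 /\ nilpotent_alg A1.
Proof.
move=> [f [[g fg gf] [fm fb]]] [[[Hm1 Hm2] [Hc Hj]] [[Hb1 Hb2] [Hs [Hnd Hinv]]]] [k [k0 Hk]].
have fi := can_inj fg.
split; last first.
  exists k; split=> // x Hx; apply: fi; rewrite linear0; apply: Hk.
  elim: Hx => [y|i j x' y' _ IH1 _ IH2]; first by constructor.
  by rewrite fm; constructor.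
rewrite /is_pE_jordan /is_jordan /is_pseudo_euclidean /=.
split; split.
- split=> a x y z; apply: fi.
    by rewrite fm linearP Hm1 -!fm linearP.
  by rewrite fm linearP Hm2 -!fm linearP.
- by split=> [x y|x y]; apply: fi; rewrite !fm; [rewrite Hc | rewrite Hj].
- by split=> a x y z; rewrite -!fb linearP ?Hb1 ?Hb2 -?fb.
- split; first by move=> x y; rewrite -!fb Hs.
  split; last by move=> x y z; rewrite -!fb !fm Hinv.
  move=> x H; apply: fi; rewrite linear0; apply: Hnd => y.
  by rewrite -[y]gf fb H.
Qed.

Lemma ca_mk3 n al (x : rV n) be : coef_a (mk3 al x be) = al.
Proof. by rewrite /coef_a /mk3 row_mxKl mxE eqxx mulr1n. Qed.
Lemma mid_mk3 n al (x : rV n) be : mid (mk3 al x be) = x.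
Proof. by rewrite /mid /mk3 row_mxKr row_mxKl. Qed.
Lemma cb_mk3 n al (x : rV n) be : coef_b (mk3 al x be) = be.
Proof. by rewrite /coef_b /mk3 row_mxKr row_mxKr mxE eqxx mulr1n. Qed.
Lemma mk3K n (u : rV (1 + (n + 1))) : mk3 (coef_a u) (mid u) (coef_b u) = u.
Proof. by rewrite /mk3 /coef_a /mid /coef_b -!mx11_scalar !hsubmxK. Qed.
Lemma coords_eq n (u v : rV (1 + (n + 1))) :
  coef_a u = coef_a v -> mid u = mid v -> coef_b u = coef_b v -> u = v.
Proof. by move=> h1 h2 h3; rewrite -[u]mk3K -[v]mk3K h1 h2 h3. Qed.
Lemma ca_lin n a (u v : rV (1 + (n + 1))) : coef_a (a *: u + v) = a * coef_a u + coef_a v.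
Proof. by rewrite /coef_a !mxE. Qed.
Lemma cb_lin n a (u v : rV (1 + (n + 1))) : coef_b (a *: u + v) = a * coef_b u + coef_b v.
Proof. by rewrite /coef_b !mxE. Qed.
Lemma mid_lin n : lin (@mid K n).
Proof. by move=> a u v; apply/rowP=> i; rewrite /mid !mxE. Qed.
Lemma mid0 n : mid (0 : rV (1 + (n + 1))) = 0.
Proof. exact: lin0 (@mid_lin n). Qed.

Section Dext.
Variables (n : nat) (A : falg K n) (D : 'M[K]_n) (x0 : rV n) (k : K).
Local Notation dm := (amul (dext A D x0 k)).
Lemma dext_ca z w : coef_a (dm z w) = 0.
Proof. by rewrite /= ca_mk3. Qed.
Lemma dext_mid z w : mid (dm z w) = (coef_a z * coef_a w) *: x0 + coef_a z *: (mid w *m D)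
   + coef_a w *: (mid z *m D) + amul A (mid z) (mid w).
Proof. by rewrite /= mid_mk3. Qed.
Lemma dext_cb z w : coef_b (dm z w) = coef_a z * coef_a w * k + coef_a z * aform A x0 (mid w)
  + coef_a w * aform A x0 (mid z) + aform A (mid z *m D) (mid w).
Proof. by rewrite /= cb_mk3. Qed.
Lemma dext_form z w : aform (dext A D x0 k) z w =
  coef_a z * coef_b w + coef_b z * coef_a w + aform A (mid z) (mid w).
Proof. by []. Qed.
End Dext.

Lemma compD n (u v : rV n) j : (u + v) 0 j = u 0 j + v 0 j. Proof. by rewrite mxE. Qed.
Lemma compZ n a (u : rV n) j : (a *: u) 0 j = a * u 0 j. Proof. by rewrite mxE. Qed.
Lemma compN n (u : rV n) j : (- u) 0 j = - u 0 j. Proof. by rewrite mxE. Qed.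
Lemma comp0 n j : (0 : rV n) 0 j = 0. Proof. by rewrite mxE. Qed.
Lemma sZmx n p a (u : rV n) (M : 'M[K]_(n, p)) : (a *: u) *m M = a *: (u *m M).
Proof. by rewrite scalemxAl. Qed.

Lemma cubic (Hch : [pchar K] =i pred0) n (c0 c1 c2 c3 : rV n) :
  (forall t : K, c0 + t *: c1 + t^+2 *: c2 + t^+3 *: c3 = 0) ->
  [/\ c0 = 0, c1 = 0, c2 = 0 & c3 = 0].
Proof.
move=> H.
have n2 : (2%:R : K) != 0 by rewrite ((pcharf0P K).1 Hch 2).
have n6 : (6%:R : K) != 0 by rewrite ((pcharf0P K).1 Hch 6).
have hc : forall j, [/\ c0 0 j = 0, c1 0 j = 0, c2 0 j = 0 & c3 0 j = 0].
  move=> j.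
  pose L := fun t : K => c0 0 j + t * c1 0 j + t^+2 * c2 0 j + t^+3 * c3 0 j.
  have hL : forall t, L t = 0.
    by move=> t; have := congr1 (fun v : rV n => v 0 j) (H t); rewrite /= !(compD, compZ, comp0).
  have e0 : c0 0 j = L 0 by rewrite /L; ring.
  have e2 : 2%:R * c2 0 j = L 1 + L (-1) - 2%:R * L 0 by rewrite /L; ring.
  have e3 : 6%:R * c3 0 j = L 2%:R - 3%:R * L 1 + 3%:R * L 0 - L (-1) by rewrite /L; ring.
  have e1 : c1 0 j = L 1 - c0 0 j - c2 0 j - c3 0 j by rewrite /L; ring.
  rewrite !hL in e0 e2 e3 e1.
  have z2 : c2 0 j = 0.
    by apply/eqP; move: e2; rewrite !mulr0 !subr0 !addr0 => /eqP; rewrite mulf_eq0 (negbTE n2).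
  have z3 : c3 0 j = 0.
    by apply/eqP; move: e3; rewrite !mulr0 !subr0 !addr0 => /eqP; rewrite mulf_eq0 (negbTE n6).
  by split=> //; rewrite e1 e0 z2 z3 !subr0.
by split; apply/rowP=> j; rewrite mxE; case: (hc j).
Qed.

Lemma e_lin n (a : K) (x y : rV n) : mk3 0 (a *: x + y) 0 = a *: mk3 0 x 0 + mk3 0 y 0.
Proof.
apply: coords_eq; rewrite ?ca_lin ?cb_lin ?mid_lin ?ca_mk3 ?cb_mk3 ?mid_mk3 //; ring.
Qed.

Lemma dext_mk3 n (A : falg K n) D x0 k al x be al' x' be' :
  amul (dext A D x0 k) (mk3 al x be) (mk3 al' x' be') =
  mk3 0 ((al*al') *: x0 + al *: (x' *m D) + al' *: (x *m D) + amul A x x')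
        (al*al'*k + al * aform A x0 x' + al' * aform A x0 x + aform A (x *m D) x').
Proof. by rewrite /= !ca_mk3 !mid_mk3. Qed.

Lemma dform_mk3 n (A : falg K n) D x0 k al x be al' x' be' :
  aform (dext A D x0 k) (mk3 al x be) (mk3 al' x' be') = al * be' + be * al' + aform A x x'.
Proof. by rewrite /= !ca_mk3 !mid_mk3 !cb_mk3. Qed.

Lemma ring_from (a b c d : K) : c = d -> a - b = c - d -> a = b.
Proof. by move=> -> /eqP; rewrite subrr subr_eq0 => /eqP. Qed.

End S.


Section S.
Variable K : fieldType.
Local Notation rV n := 'rV[K]_n.

Lemma dext_comp n (A : falg K n) D x0 k :
  is_pE_jordan (dext A D x0 k) -> nilpotent_alg (dext A D x0 k) ->
  [/\ is_pE_jordan A, nilpotent_alg A, form_symmetric A D &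
     forall x y, amul (dext A D x0 k) x (amul (dext A D x0 k) y (amul (dext A D x0 k) x x))
        = amul (dext A D x0 k) (amul (dext A D x0 k) x y) (amul (dext A D x0 k) x x)].
Proof.
move=> [[[Hm1 Hm2] [Hc Hj]] [[Hb1 Hb2] [Hs [Hnd Hinv]]]] [kk [k0 Hk]].
have hm : forall x y, amul A x y = mid (amul (dext A D x0 k) (mk3 0 x 0) (mk3 0 y 0)).
  by move=> x y; rewrite dext_mk3 mid_mk3 !mul0r !scale0r !add0r.
have hf : forall x y, aform A x y = aform (dext A D x0 k) (mk3 0 x 0) (mk3 0 y 0).
  by move=> x y; rewrite dform_mk3 !mul0r !add0r.
have bilA : bilinear_mul (amul A).
  by split=> a x y z; rewrite !hm e_lin ?Hm1 ?Hm2 mid_lin.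
have comA : forall x y, amul A x y = amul A y x by move=> x y; rewrite !hm Hc.
have bfA : bilinear_form (aform A) by split=> a x y z; rewrite !hf e_lin ?Hb1 ?Hb2.
split=> //.
- split; split=> //.
  + split=> // x y; have := congr1 (@mid K n) (Hj (mk3 0 x 0) (mk3 0 y 0)).
    by rewrite !dext_mk3 !mid_mk3 !mul0r !scale0r !add0r.
  + split; first by move=> x y; rewrite !hf Hs.
    split.
      move=> x H; have: mk3 0 x 0 = 0.
        apply: Hnd => w; rewrite -[w]mk3K dform_mk3 !mul0r !add0r.
        by rewrite H.
      by move/(congr1 (@mid K n)); rewrite mid_mk3 mid0.
    move=> x y z.
    have := Hinv (mk3 0 x 0) (mk3 0 y 0) (mk3 0 z 0).
    by rewrite !dext_mk3 !dform_mk3 !mul0r !scale0r !add0r !mulr0 !add0r.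
- exists kk; split=> // x Hx.
  have: exists z, [/\ prod_deg (dext A D x0 k) kk z, coef_a z = 0 & mid z = x].
    elim: Hx => [y|i j x' y' _ [z1 [H1 a1 m1]] _ [z2 [H2 a2 m2]]].
      by exists (mk3 0 y 0); rewrite ca_mk3 mid_mk3; split=> //; constructor.
    exists (amul (dext A D x0 k) z1 z2); split; first by constructor.
      by rewrite -[z1]mk3K -[z2]mk3K dext_mk3 ca_mk3.
    by rewrite -[z1]mk3K -[z2]mk3K dext_mk3 mid_mk3 a1 a2 m1 m2 !mul0r !scale0r !add0r.
  by move=> [z [Hz az mz]]; rewrite -mz (Hk _ Hz) mid0.
- move=> x y.
  have := Hinv (mk3 0 x 0) (mk3 0 y 0) (mk3 1 0 0).
  rewrite !dext_mk3 !dform_mk3 (bm0r bilA) !(bf0r bfA) mul0mx.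
  by rewrite ?mul0r ?mulr0 ?scale0r ?add0r ?addr0 ?mulr1 ?mul1r ?scale1r.
Qed.

End S.


Section S.
Variable K : fieldType.
Local Notation rV n := 'rV[K]_n.

Lemma ring_from2 (l a b c d : K) : c = d -> a - b = l * (c - d) -> a = b.
Proof. by move=> -> /eqP; rewrite subrr mulr0 subr_eq0 => /eqP. Qed.

Ltac comps := rewrite ?(compD, compZ, compN, comp0).
Ltac fin l h := let j := fresh "j" in let h' := fresh "h'" in
  apply/rowP => j; move: (congr1 (fun v : matrix K 1 _ => v 0 j) h); comps; move=> h'; comps;
  apply: (@ring_from2 l _ _ _ _ h').

Lemma dext_adm (Hch : [pchar K] =i pred0) n (A : falg K n) D x0 k (bil : bilinear_mul (amul A))
 (comA : forall x y, amul A x y = amul A y x)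
 (Hj : forall x y, amul (dext A D x0 k) x (amul (dext A D x0 k) y (amul (dext A D x0 k) x x))
        = amul (dext A D x0 k) (amul (dext A D x0 k) x y) (amul (dext A D x0 k) x x)) :
 admissible A D x0.
Proof.
have n2 : (2%:R : K) != 0 by rewrite ((pcharf0P K).1 Hch 2).
have J1 : forall x y : rV n, [/\ amul A x (amul A y (amul A x x)) - amul A (amul A x y) (amul A x x) = 0,
   (amul A y (amul A x x)) *m D + 2%:R *: amul A x (amul A y (x *m D)) - amul A (y *m D) (amul A x x) - 2%:R *: amul A (amul A x y) (x *m D) = 0,
   2%:R *: ((amul A y (x *m D)) *m D) + amul A x (amul A y x0) - 2%:R *: amul A (y *m D) (x *m D) - amul A (amul A x y) x0 = 0 &
   (amul A y x0) *m D - amul A (y *m D) x0 = 0].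
  move=> x y; apply: cubic => // t.
  have := congr1 (@mid K n) (Hj (mk3 t x 0) (mk3 0 y 0)).
  rewrite !dext_mk3 !mid_mk3 ?(bmDr bil, bmDl bil, bmZr bil, bmZl bil, mulmxDl, sZmx) => h.
  apply/rowP => j; move: (congr1 (fun v : rV n => v 0 j) h); comps => {}h; comps.
  apply: (@ring_from2 1 _ _ _ _ h); ring.
have J2 : forall x : rV n, [/\ amul A x ((amul A x x) *m D) - amul A (x *m D) (amul A x x) = 0,
   (amul A x x) *m D *m D + 2%:R *: amul A x (x *m D *m D) - 2%:R *: amul A (x *m D) (x *m D) - amul A x0 (amul A x x) = 0,
   2%:R *: (x *m D *m D *m D) + amul A x (x0 *m D) - amul A (x *m D) x0 - 2%:R *: amul A x0 (x *m D) = 0 &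
   x0 *m D *m D - amul A x0 x0 = 0].
  move=> x; apply: cubic => // t.
  have := congr1 (@mid K n) (Hj (mk3 t x 0) (mk3 1 0 0)).
  rewrite !dext_mk3 !mid_mk3 ?(bmDr bil, bmDl bil, bmZr bil, bmZl bil, mulmxDl, sZmx, bm0r bil, bm0l bil, mul0mx) => h.
  apply/rowP => j; move: (congr1 (fun v : rV n => v 0 j) h); comps => {}h; comps.
  apply: (@ring_from2 1 _ _ _ _ h); ring.
rewrite /admissible /=.
split; [|split; [|split; [|split; [|split; [|split]]]]].
- move=> x y; have [_ h _ _] := J1 x y.
  rewrite (comA (amul A x x) y) (comA (amul A x x) (y *m D)) (comA (x *m D) (amul A x y)) (comA (x *m D) y).
  fin (1:K) h; ring.
- move=> x y; have [_ _ h _] := J1 x y.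
  rewrite /assoc (comA (x *m D) (y *m D)) (comA (x *m D) y) (comA (amul A x0 y) x) (comA x0 y) (comA x0 (amul A y x)) (comA y x).
  fin (- 2%:R^-1 : K) h; field; exact: n2.
- move=> x; have [_ _ _ h] := J1 x x.
  rewrite (comA x0 x) (comA x0 (x *m D)).
  fin (1:K) h; ring.
- move=> x; have [h _ _ _] := J2 x.
  rewrite (comA (amul A x x) (x *m D)).
  fin (1:K) h; ring.
- move=> x; have [_ h _ _] := J2 x.
  fin (1:K) h; ring.
- move=> x; have [_ _ h _] := J2 x.
  rewrite (comA (x *m D) x0) in h.
  fin (2%:R^-1 : K) h; field; exact: n2.
- have [_ _ _ h] := J2 x0.
  fin (1:K) h; ring.
Qed.
End S.


Section S.
Variable K : fieldType.
Local Notation rV n := 'rV[K]_n.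

Lemma lsub_lin n1 n2 : lin (@lsubmx K 1 n1 n2).
Proof. by move=> a u v; apply/rowP=> i; rewrite !mxE. Qed.
Lemma rsub_lin n1 n2 : lin (@rsubmx K 1 n1 n2).
Proof. by move=> a u v; apply/rowP=> i; rewrite !mxE. Qed.
Lemma rowmx_lin n1 n2 a (x x' : rV n1) (y y' : rV n2) :
  row_mx (a *: x + x') (a *: y + y') = a *: row_mx x y + row_mx x' y'.
Proof. by rewrite scale_row_mx add_row_mx. Qed.

Lemma mk3_lin n a al al' (x x' : rV n) be be' :
  mk3 (a * al + al') (a *: x + x') (a * be + be') = a *: mk3 al x be + mk3 al' x' be'.
Proof.
apply: coords_eq; rewrite ?ca_lin ?cb_lin ?mid_lin ?ca_mk3 ?cb_mk3 ?mid_mk3 //.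
Qed.

Lemma osum_iso n1 n2 n1' n2' (A1 : falg K n1) (A2 : falg K n2) (A1' : falg K n1') (A2' : falg K n2') :
  isometric_iso A1' A1 -> isometric_iso A2' A2 -> isometric_iso (osum A1' A2') (osum A1 A2).
Proof.
move=> [f1 [[g1 fg1 gf1] [fm1 fb1]]] [f2 [[g2 fg2 gf2] [fm2 fb2]]].
apply: (@mk_iso _ _ _ _ _ (fun u => row_mx (f1 (lsubmx u)) (f2 (rsubmx u)))
                        (fun u => row_mx (g1 (lsubmx u)) (g2 (rsubmx u)))).
- by move=> a u v; rewrite lsub_lin rsub_lin !linearP rowmx_lin.
- by move=> u; rewrite row_mxKl row_mxKr fg1 fg2 hsubmxK.
- by move=> u; rewrite row_mxKl row_mxKr gf1 gf2 hsubmxK.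
- by move=> u v /=; rewrite !row_mxKl !row_mxKr fm1 fm2.
- by move=> u v /=; rewrite !row_mxKl !row_mxKr fb1 fb2.
Qed.

Lemma dext_iso n n' (A : falg K n) (A' : falg K n') D x0 k :
  isometric_iso A' A -> exists D' x0', isometric_iso (dext A' D' x0' k) (dext A D x0 k).
Proof.
move=> [f [[g fg gf] [fm fb]]].
have hlin : lin (fun w => g (f w *m D)).
  by move=> a u v; rewrite !linearP mulmxDl sZmx (inv_lin (iso_lin f) fg gf).
exists (lin1_mx (fun w => g (f w *m D))), (g x0).
apply: (@mk_iso _ _ _ _ _ (fun u => mk3 (coef_a u) (f (mid u)) (coef_b u))
                        (fun u => mk3 (coef_a u) (g (mid u)) (coef_b u))).
- by move=> a u v; rewrite ca_lin cb_lin mid_lin linearP mk3_lin.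
- by move=> u; rewrite ca_mk3 mid_mk3 cb_mk3 fg mk3K.
- by move=> u; rewrite ca_mk3 mid_mk3 cb_mk3 gf mk3K.
- move=> u v /=; rewrite !ca_mk3 !mid_mk3 !cb_mk3 !lin1E //.
  by rewrite !linearD !linearZ /= fm !gf -!fb !gf.
- by move=> u v; rewrite dform_mk3 /= fb.
Qed.

Lemma osum_comp2 n1 n2 (A1 : falg K n1) (A2 : falg K n2) :
  is_pE_jordan (osum A1 A2) -> nilpotent_alg (osum A1 A2) -> aform A1 0 0 = 0 ->
  is_pE_jordan A2 /\ nilpotent_alg A2.
Proof.
move=> [[[Hm1 Hm2] [Hc Hj]] [[Hb1 Hb2] [Hs [Hnd Hinv]]]] [kk [k0 Hk]] H00.
have bil : bilinear_mul (amul (osum A1 A2)) by split.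
have bf : bilinear_form (aform (osum A1 A2)) by split.
have e2lin : forall a (x y : rV n2), row_mx (0 : rV n1) (a *: x + y) = a *: row_mx 0 x + row_mx 0 y.
  by move=> a x y; rewrite -rowmx_lin scaler0 addr0.
have hm : forall x y, amul A2 x y = rsubmx (amul (osum A1 A2) (row_mx 0 x) (row_mx 0 y)).
  by move=> x y; rewrite /= !row_mxKr.
have A2_00 : aform A2 0 0 = 0.
  have := bf0l bf 0; rewrite /= -[0 : rV (n1 + n2)]row_mx0 row_mxKl row_mxKr H00 add0r.
  by [].
have hf : forall x y, aform A2 x y = aform (osum A1 A2) (row_mx 0 x) (row_mx 0 y).
  by move=> x y; rewrite /= !row_mxKr !row_mxKl H00 add0r.
have A1_0 : forall z, aform A1 0 z = 0.
  move=> z; have := bf0l bf (row_mx z 0); rewrite /= -[0 : rV (n1 + n2)]row_mx0.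
  by rewrite !row_mxKl !row_mxKr A2_00 addr0.
have M1_0 : forall z, amul A1 0 z = 0.
  move=> z; have := bm0l bil (row_mx z 0); rewrite /= -[0 : rV (n1 + n2)]row_mx0.
  by rewrite !row_mxKl => /eq_row_mx [].
split; last first.
  exists kk; split=> // x Hx.
  have: exists z, prod_deg (osum A1 A2) kk z /\ rsubmx z = x.
    elim: Hx => [y|i j x' y' _ [z1 [H1 m1]] _ [z2 [H2 m2]]].
      by exists (row_mx 0 y); rewrite row_mxKr; split=> //; constructor.
    exists (amul (osum A1 A2) z1 z2); split; first by constructor.
    by rewrite /= row_mxKr m1 m2.
  by move=> [z [Hz mz]]; rewrite -mz (Hk _ Hz) -[0 : rV (n1 + n2)]row_mx0 row_mxKr.
split; split.
- by split=> a x y z; rewrite !hm e2lin ?Hm1 ?Hm2 rsub_lin.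
- split; first by move=> x y; rewrite !hm Hc.
  move=> x y; have := congr1 (@rsubmx K 1 n1 n2) (Hj (row_mx 0 x) (row_mx 0 y)).
  by rewrite /= !row_mxKl !row_mxKr.
- by split=> a x y z; rewrite !hf e2lin ?Hb1 ?Hb2.
- split; first by move=> x y; rewrite !hf Hs.
  split.
    move=> x H; have: row_mx (0 : rV n1) x = 0.
      by apply: Hnd => w; rewrite /= row_mxKl row_mxKr A1_0 H add0r.
    by move/(congr1 (@rsubmx K 1 n1 n2)); rewrite row_mxKr -[0 : rV (n1 + n2)]row_mx0 row_mxKr.
  move=> x y z; rewrite !hf.
  have -> : row_mx 0 (amul A2 x y) = amul (osum A1 A2) (row_mx 0 x) (row_mx 0 y).
    by rewrite /= !row_mxKl !row_mxKr M1_0.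
  have -> : row_mx 0 (amul A2 y z) = amul (osum A1 A2) (row_mx 0 y) (row_mx 0 z).
    by rewrite /= !row_mxKl !row_mxKr M1_0.
  exact: Hinv.
Qed.

Definition E1 (b : K) : falg K 1 := FAlg (fun _ _ => 0) (fun x y => x 0 0 * y 0 0 * b).

Lemma E1_ok (b : K) : b != 0 -> in_E (E1 b) /\ is_pE_jordan (E1 b).
Proof.
move=> b0; split; first by right.
rewrite /is_pE_jordan /is_jordan /is_pseudo_euclidean /=.
split; split.
- by split=> a x y z /=; rewrite scaler0 addr0.
- by [].
- by split=> a x y z /=; rewrite !mxE; ring.
- split; first by move=> x y /=; ring.
  split; last by move=> x y z /=; rewrite !mxE; ring.
  move=> x H; have := H (const_mx 1); rewrite /= mxE mulr1 => /eqP.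
  rewrite mulf_eq0 (negbTE b0) orbF => /eqP x0.
  by apply/rowP=> i; rewrite ord1 x0 mxE.
Qed.

End S.


Section S.
Variable K : fieldType.
Local Notation rV n := 'rV[K]_n.

Section Compl.
Variables (n p : nat) (l : rV n -> rV p).
Hypothesis Hl : lin l.
Local Notation L := (lin1_mx l).
Definition crk := \rank (kermx L).
Definition cg (w : rV crk) : rV n := w *m row_base (kermx L).
Definition ch (z : rV n) : rV crk := z *m pinvmx (row_base (kermx L)).

Lemma cg_lin : lin cg.
Proof. by move=> a u v; rewrite /cg mulmxDl sZmx. Qed.
Lemma ch_lin : lin ch.
Proof. by move=> a u v; rewrite /ch mulmxDl sZmx. Qed.

Lemma cG1 w : l (cg w) = 0.
Proof.
rewrite -lin1E // /cg -mulmxA.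
have: (row_base (kermx L) <= kermx L)%MS by rewrite eq_row_base.
by rewrite sub_kermx => /eqP ->; rewrite mulmx0.
Qed.

Lemma cG2 z : l z = 0 -> cg (ch z) = z.
Proof.
move=> hz; rewrite /cg /ch mulmxKpV //.
by rewrite eq_row_base sub_kermx lin1E // hz.
Qed.

Lemma cG3 w : ch (cg w) = w.
Proof.
apply: (row_free_inj (row_base_free (kermx L))) => /=.
by have := cG2 (cG1 w); rewrite /cg.
Qed.

Lemma cG4 z : l z != 0 -> (crk < n)%N.
Proof.
move=> hz; rewrite /crk mxrank_ker.
have h1 : (0 < \rank L)%N.
  rewrite lt0n mxrank_eq0; apply: contraNneq hz => L0.
  by rewrite -lin1E // L0 mulmx0.
have h2 : (\rank L <= n)%N by exact: rank_leq_row.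
lia.
Qed.
End Compl.

End S.


Section S.
Variable K : fieldType.
Local Notation rV n := 'rV[K]_n.

Lemma ann_exists n (J : falg K n) : nilpotent_alg J -> (0 < n)%N ->
  exists c : rV n, c != 0 /\ forall x, amul J c x = 0.
Proof.
move=> [k [k0 Hk]] n0.
apply: NNPP => H.
have P : forall i, exists x, prod_deg J i.+1 x /\ x != 0.
  elim=> [|i [x [Hx x0]]].
    exists (const_mx 1); split; first by constructor.
    apply/eqP => /rowP /(_ (Ordinal n0)); rewrite !mxE; apply/eqP; exact: oner_neq0.
  have: ~ forall y, amul J x y = 0 by move=> Hy; apply: H; exists x.
  move=> /not_all_ex_not [y Hy]; exists (amul J x y); split; last by apply/eqP.
  by rewrite -[i.+2]addn1; apply: prod_degM Hx (prod_deg1 _ _).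
have [x [Hx x0]] := P k.-1.
by move: x0; rewrite (Hk x) ?eqxx // -(prednK k0).
Qed.

End S.


Section S.
Variable K : fieldType.
Local Notation rV n := 'rV[K]_n.

Lemma caseA n (J : falg K n) (c : rV n) : is_pE_jordan J -> (forall x, amul J c x = 0) ->
  aform J c c != 0 ->
  exists r (Cf : falg K r), (r < n)%N /\ isometric_iso (osum (E1 (aform J c c)) Cf) J.
Proof.
move=> [[bil [Hc Hj]] [bf [Hs [Hnd Hinv]]]] Hann b0.
set B := aform J in bf Hs Hnd Hinv b0 *; set m := amul J in bil Hc Hj Hann Hinv *.
set beta := B c c.
pose l := fun z : rV n => (const_mx (B z c) : rV 1).
have Hl : lin l by move=> a x y; apply/rowP=> i; rewrite !mxE (proj1 bf).
pose g := @cg K n 1 l; pose h := @ch K n 1 l.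
have glin : lin g by exact: cg_lin.
have hg : forall w, h (g w) = w by move=> w; exact: cG3.
have gh : forall z, l z = 0 -> g (h z) = z by move=> z; exact: cG2.
have Bgc : forall w, B (g w) c = 0.
  by move=> w; have := congr1 (fun v : rV 1 => v 0 0) (cG1 Hl w); rewrite !mxE.
have Bcg : forall w, B c (g w) = 0 by move=> w; rewrite Hs.
pose pi := fun z => z - (B z c / beta) *: c.
have lpi : forall z, l (pi z) = 0.
  move=> z; apply/rowP=> i; rewrite !mxE /pi (bfDl bf) (bfNl bf) (bfZl bf).
  by rewrite /beta; field.
have mc : forall x, m x c = 0 by move=> x; rewrite Hc Hann.
exists (crk l), (FAlg (fun w w' => h (pi (m (g w) (g w')))) (fun w w' => B (g w) (g w'))).
split.
  apply: (cG4 Hl (z := c)); apply/eqP => /(congr1 (fun v : rV 1 => v 0 0)).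
  by rewrite !mxE; apply/eqP.
apply: (@mk_iso _ _ _ _ _ (fun u => (lsubmx u 0 0) *: c + g (rsubmx u))
                        (fun z => row_mx (const_mx (B z c / beta)) (h (pi z)))).
- move=> a u v; rewrite rsub_lin lsub_lin glin compD compZ.
  by rewrite scalerDl scalerDr scalerA addrACA.
- move=> u; rewrite (bfDl bf) (bfZl bf) Bgc addr0 mulfK //.
  rewrite /pi (bfDl bf) (bfZl bf) Bgc addr0 mulfK // addrAC subrr add0r hg.
  rewrite -[RHS]hsubmxK; congr row_mx; apply/rowP=> i; rewrite ord1 !mxE.
  by [].
- move=> z; rewrite row_mxKl row_mxKr mxE (gh _ (lpi _)) /pi addrC subrK.
  by [].
- move=> u v /=; rewrite row_mxKl row_mxKr mxE scale0r add0r (gh _ (lpi _)).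
  rewrite /pi Hinv mc (bf0r bf) mul0r scale0r subr0 -/m.
  rewrite (bmDl bil) !(bmDr bil) !(bmZl bil) !(bmZr bil) Hann mc !scaler0 !add0r.
  by rewrite Hann scaler0 add0r.
- move=> u v /=; rewrite -/B.
  rewrite (bfDl bf) !(bfDr bf) !(bfZl bf) !(bfZr bf) !Bgc !Bcg.
  by rewrite /beta; ring.
Qed.

End S.

Section CB.
Variable K : fieldType.
Local Notation rV n := 'rV[K]_n.

Lemma caseB (Hch : [pchar K] =i pred0) n (J : falg K n) (c : rV n) : is_pE_jordan J ->
  (forall x, amul J c x = 0) -> c != 0 -> aform J c c = 0 ->
  exists r (Wf : falg K r) D x0 k, (r < n)%N /\ isometric_iso (dext Wf D x0 k) J.
Proof.
move=> [[bil [Hc Hj]] [bf [Hs [Hnd Hinv]]]] Hann c0 Bcc.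
set B := aform J in bf Hs Hnd Hinv Bcc *; set m := amul J in bil Hc Hj Hann Hinv *.
have n2 : (2%:R : K) != 0 by rewrite ((pcharf0P K).1 Hch 2).
have [y Hy] : exists y, B c y != 0.
  apply: NNPP => H; move/eqP: c0; apply; apply: Hnd => y.
  by apply/eqP; apply: contraT => hy; case: H; exists y.
have [a [Bca Baa]] : exists a, B c a = 1 /\ B a a = 0.
  pose a1 := (B c y)^-1 *: y.
  have Bca1 : B c a1 = 1 by rewrite /a1 (bfZr bf) mulVf.
  exists (a1 - (B a1 a1 / 2%:R) *: c); split.
    by rewrite (bfDr bf) (bfNr bf) (bfZr bf) Bcc mulr0 subr0.
  rewrite !(bfDl bf, bfDr bf, bfNl bf, bfNr bf, bfZl bf, bfZr bf) Bcc (Hs y c).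
  by field; rewrite ?Hy ?n2.
have Bac : B a c = 1 by rewrite Hs.
clear Hy y.
have mc : forall x, m x c = 0 by move=> x; rewrite Hc Hann.
pose l := fun z : rV n => row_mx (const_mx (B z a) : rV 1) (const_mx (B z c) : rV 1).
have Hl : lin l.
  move=> s x z; rewrite /l -rowmx_lin; congr row_mx; apply/rowP=> i; by rewrite !mxE (proj1 bf).
have lz : forall z, l z = 0 -> B z a = 0 /\ B z c = 0.
  move=> z; rewrite /l -[0 : rV (1 + 1)]row_mx0 => /eq_row_mx [h1 h2].
  split; [move: (congr1 (fun v : rV 1 => v 0 0) h1) | move: (congr1 (fun v : rV 1 => v 0 0) h2)];
  by rewrite !mxE.
pose g := @cg K n (1 + 1) l; pose h := @ch K n (1 + 1) l.
have glin : lin g by exact: cg_lin.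
have hlin : lin h by exact: ch_lin.
have hg : forall w, h (g w) = w by move=> w; exact: cG3.
have gh : forall z, l z = 0 -> g (h z) = z by move=> z; exact: cG2.
have Bga : forall w, B (g w) a = 0 by move=> w; case: (lz _ (cG1 Hl w)).
have Bgc : forall w, B (g w) c = 0 by move=> w; case: (lz _ (cG1 Hl w)).
have Bag : forall w, B a (g w) = 0 by move=> w; rewrite Hs.
have Bcg : forall w, B c (g w) = 0 by move=> w; rewrite Hs.
pose pi := fun z => z - B z c *: a - B z a *: c.
have lpi : forall z, l (pi z) = 0.
  move=> z; have e1 : B (pi z) a = 0.
    by rewrite /pi !(bfDl bf, bfNl bf, bfZl bf) Baa Bca; ring.
  have e2 : B (pi z) c = 0.
    by rewrite /pi !(bfDl bf, bfNl bf, bfZl bf) Bac Bcc; ring.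
  by rewrite /l e1 e2 row_mx0.
have pilin : lin pi.
  move=> s x z; rewrite /pi !(bfDl bf, bfZl bf).
  by apply/rowP=> j; rewrite !(compD, compZ, compN); ring.
have mlin : lin (m a) by move=> s x z; rewrite (bmDr bil) (bmZr bil).
pose Df := fun w => h (pi (m a (g w))).
have Dlin : lin Df by move=> s x z; rewrite /Df glin mlin pilin hlin.
pose D := lin1_mx Df.
have DE : forall w, w *m D = Df w by move=> w; rewrite /D lin1E.
pose x0 := h (pi (m a a)).
pose k := B (m a a) a.
pose Wf := FAlg (fun w w' => h (pi (m (g w) (g w')))) (fun w w' => B (g w) (g w')).
have Bmc : forall x y, B (m x y) c = 0 by move=> x y; rewrite Hinv mc (bf0r bf).
have e1 : forall w, B (m a (g w)) a = B (m a a) (g w).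
  by move=> w; rewrite Hc Hinv Hs.
have e2 : forall w w', B (m (g w) (g w')) a = B (m a (g w)) (g w').
  by move=> w w'; rewrite [RHS]Hinv Hs.
have pi_m : forall x y, pi (m x y) = m x y - B (m x y) a *: c.
  by move=> x y; rewrite /pi Bmc scale0r subr0.
have gx0 : g x0 = m a a - k *: c by rewrite /x0 (gh _ (lpi _)) pi_m.
have gD : forall w, g (w *m D) = m a (g w) - B (m a a) (g w) *: c.
  by move=> w; rewrite DE /Df (gh _ (lpi _)) pi_m e1.
have Bx0 : forall w, B (g x0) (g w) = B (m a a) (g w).
  by move=> w; rewrite gx0 (bfDl bf) (bfNl bf) (bfZl bf) Bcg mulr0 subr0.
have BD : forall w w', B (g (w *m D)) (g w') = B (m a (g w)) (g w').
  by move=> w w'; rewrite gD (bfDl bf) (bfNl bf) (bfZl bf) Bcg mulr0 subr0.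
exists (crk l), Wf, D, x0, k; split.
  apply: (cG4 Hl (z := c)); apply/eqP => /lz [h1 _]; move: h1.
  by rewrite Bca => /eqP; rewrite oner_eq0.
apply: (@mk_iso _ _ _ _ _ (fun u => coef_a u *: a + g (mid u) + coef_b u *: c)
                          (fun z => mk3 (B z c) (h (pi z)) (B z a))).
- move=> s u v; rewrite ca_lin cb_lin mid_lin glin.
  by apply/rowP=> j; rewrite !(compD, compZ, compN); ring.
- move=> u.
  have hc : B (coef_a u *: a + g (mid u) + coef_b u *: c) c = coef_a u.
    by rewrite !(bfDl bf, bfZl bf) Bac Bgc Bcc; ring.
  have ha : B (coef_a u *: a + g (mid u) + coef_b u *: c) a = coef_b u.
    by rewrite !(bfDl bf, bfZl bf) Baa Bga Bca; ring.
  have hp : pi (coef_a u *: a + g (mid u) + coef_b u *: c) = g (mid u).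
    by rewrite /pi hc ha; apply/rowP=> j; rewrite !(compD, compZ, compN); ring.
  by rewrite hc ha hp hg mk3K.
- move=> z /=; rewrite ca_mk3 mid_mk3 cb_mk3 (gh _ (lpi _)) /pi.
  by apply/rowP=> j; rewrite !(compD, compZ, compN); ring.
- move=> u v /=; rewrite !ca_mk3 !mid_mk3 !cb_mk3 -/m.
  rewrite Bx0 Bx0 BD !(linD glin) !(linZ glin) gx0 !gD (gh _ (lpi _)) pi_m e2.
  rewrite !(bmDl bil) !(bmDr bil) !(bmZl bil) !(bmZr bil) !Hann !mc (Hc (g (mid u)) a).
  by apply/rowP=> j; rewrite !(compD, compZ, compN, comp0); ring.
- move=> u v; rewrite dext_form /= -/B.
  rewrite !(bfDl bf) !(bfDr bf) !(bfZl bf) !(bfZr bf) Baa Bac Bca Bcc !Bga !Bgc !Bag !Bcg.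
  by ring.
Qed.
End CB.


Lemma main_gen (K : fieldType) (Hch : [pchar K] =i pred0) n :
  forall (J : falg K n), is_pE_jordan J -> nilpotent_alg J ->
  exists (m : nat) (J' : falg K m), obtained J' /\ isometric_iso J' J.
Proof.
elim/ltn_ind: n => n IH J HJ Hn.
case: (posnP n) => [n0 | n_gt0].
  by exists n, J; split; [apply: obt_base => //; left | exact: iso_refl].
have [c [c0 Hann]] := ann_exists Hn n_gt0.
case: (eqVneq (aform J c c) 0) => Bcc.
  have [r [Wf [D [x0 [k [rn iso]]]]]] := caseB Hch HJ Hann c0 Bcc.
  have [Hd Hdn] := transport iso HJ Hn.
  have [HW HWn _ _] := dext_comp Hd Hdn.
  have [m' [W' [obW isoW]]] := IH r rn Wf HW HWn.
  have [D' [x0' isoD]] := dext_iso D x0 k isoW.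
  have isoT := iso_trans isoD iso.
  have [Hd' Hdn'] := transport isoT HJ Hn.
  have [[[bil [comA _]] _] _ Hsym Hjd] := dext_comp Hd' Hdn'.
  exists (1 + (m' + 1))%N, (dext W' D' x0' k); split => //.
  apply: obt_dext => //. have := @dext_adm K Hch _ W' D' x0' k bil comA Hjd. exact.
have [r [Cf [rn iso]]] := caseA HJ Hann Bcc.
have [Ho Hon] := transport iso HJ Hn.
have E10 : aform (E1 (aform J c c)) 0 0 = 0 by rewrite /= !mxE !mul0r.
have [HC HCn] := osum_comp2 Ho Hon E10.
have [m' [C' [obC isoC]]] := IH r rn Cf HC HCn.
have [inE1 pE1] := E1_ok Bcc.
exists (1 + m')%N, (osum (E1 (aform J c c)) C'); split.
  by apply: obt_osum => //; exact: obt_base.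
exact: iso_trans (osum_iso (iso_refl _) isoC) iso.
Qed.


Unset Implicit Arguments.

Theorem mainTheorem7 (K : fieldType) (Hchar : [pchar K] =i pred0)
  (n : nat) (J : falg K n) :
  is_pE_jordan J -> nilpotent_alg J -> ~ in_E J ->
  exists (m : nat) (J' : falg K m), obtained J' /\ isometric_iso J' J.
Proof.
move=> HJ Hn _; exact: main_gen Hchar n J HJ Hn.
Qed.
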